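(* Let $\gamma_1,\gamma_2>0$ and consider the birth-death chain RDS $(\theta,\varphi)$ on $\mathbb{N}_0$ described in the context. Let $d\in\mathbb{Z}\setminus\{0\}$ and $I_d:=\{(x,y)\in\mathbb{N}_0^2 : x-y=d\}$. Then for every $(x_0,y_0)\in I_d$, \[ \mathbb{P}\big((\varphi^n_q(x_0),\varphi^n_q(y_0))\in I_d \ \text{for all } n\geq 0\big)=0, \] i.e. the two-point motion $(\varphi^n_q(x_0),\varphi^n_q(y_0))_{n\in\mathbb{N}_0}$ leaves $I_d$ almost surely.
   Context: Noise space: $\mathcal{Q}_+=\{q=(q_n)_{n\in\mathbb{N}_0}: q_n\in[0,1]\}$ with the product Borel $\sigma$-algebra and the product measure $\mathbb{P}=\lambda^{\mathbb{N}_0}$, $\lambda$ Lebesgue measure on $[0,1]$; shift $\theta(q_0,q_1,\dots)=(q_1,q_2,\dots)$. For $q\in\mathcal{Q}_+$ define $f_q:\mathbb{N}_0\to\mathbb{N}_0$ by $f_q(x)=x+1$ if $q_0<\frac{\gamma_1}{\gamma_1+\gamma_2x}$ and $f_q(x)=x-1$ otherwise (the embedded Markov chain of the birth-death reaction network $\emptyset\to\mathcal{S}$ at rate $\gamma_1$, $\mathcal{S}\to\emptyset$ at rate $\gamma_2x$). The cocycle is $\varphi^0_q(x)=x$ and $\varphi^n_q(x)=f_{\theta^{n-1}q}\circ\cdots\circ f_q(x)$ for $n\geq1$. The pair $(\varphi^n_q(x_0),\varphi^n_q(y_0))_n$ with the same $q$ is called the two-point motion. *)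

(* Defs.v *)
From mathcomp Require Import all_boot all_order all_algebra.
From mathcomp Require Import all_classical all_reals all_analysis.
Set Implicit Arguments. Unset Strict Implicit. Unset Printing Implicit Defensive.
Import Order.TTheory GRing.Theory Num.Theory.
Local Open Scope classical_set_scope.
Local Open Scope ring_scope.

Definition bd_step (R : realType) (g1 g2 : R) (u : R) (x : nat) : nat :=
  if u < g1 / (g1 + g2 * x%:R) then x.+1 else x.-1.

(* Cocycle: phi^0_q(x) = x, phi^{n+1}_q(x) = f_{theta^n q}(phi^n_q(x)),
   and f_{theta^n q} only looks at the coordinate q_n. *)
Fixpoint bd_cocycle (R : realType) (g1 g2 : R) (q : nat -> R) (n : nat)
    (x : nat) : nat :=
  match n with
  | 0 => x
  | n'.+1 => bd_step g1 g2 (q n') (bd_cocycle g1 g2 q n' x)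
  end.

Definition I_d (d : int) : set (nat * nat) :=
  [set xy | (xy.1%:Z - xy.2%:Z = d)%R].

Definition unit_interval (R : realType) : set R := `[(0:R), 1]%classic.

(* Equivalently, the law of (U_n)_n on R^N is the product measure
   lambda^{N_0} of the noise space Q_+. *)
Definition iid_uniform01 (d : measure_display) (T : measurableType d)
    (R : realType) (P : probability T R) (U : nat -> T -> R) : Prop :=
  (forall i, measurable_fun setT (U i)) /\
  (forall (n : nat) (A : nat -> set R), (forall i, measurable (A i)) ->
     P (\bigcap_(i in `I_n) (U i @^-1` A i)) =
     (\prod_(i < n) (lebesgue_measure (A i `&` @unit_interval R)))%E).

(* Main.v *)
Require Import Defs.
From mathcomp Require Import all_boot all_order all_algebra.
From mathcomp Require Import all_classical all_reals all_analysis.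
From mathcomp Require Import ring lra zify.
Import Order.TTheory GRing.Theory Num.Theory.
Local Open Scope classical_set_scope.
Local Open Scope ring_scope.

Definition nxt (y : nat) (b : bool) : nat := if b then y.+1 else y.-1.
Definition endst (m : nat) (s : seq bool) : nat := foldl nxt m s.

Fixpoint paths (n : nat) : seq (seq bool) :=
  match n with
  | 0 => [:: [::]]
  | n'.+1 => [seq rcons s true | s <- paths n'] ++ [seq rcons s false | s <- paths n']
  end.

Lemma mem_paths n s : size s = n -> s \in paths n.
Proof.
elim: n s => [|n IH] s.
  by case: s.
case/lastP: s => [//|s b]; rewrite size_rcons => -[/IH Hs] /=.
by rewrite mem_cat; case: b; [rewrite (map_f _ Hs)|rewrite (map_f _ Hs) orbT].
Qed.

Section W.
Variable R : realType.
Variables (pp : nat -> R) (D : nat).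

Definition wgt (m : nat) (s : seq bool) (i : nat) : R :=
  let y := endst m (take i s) in
  if nth false s i then pp (y + D)%N else if y == 0%N then 0 else 1 - pp y.

Definition W m s := \prod_(i < size s) wgt m s i.

Lemma W_rcons m s b : W m (rcons s b) =
  W m s * (if b then pp (endst m s + D)%N else if endst m s == 0%N then 0 else 1 - pp (endst m s)).
Proof.
rewrite /W size_rcons big_ord_recr /=; congr (_ * _).
  apply: eq_bigr => i _; rewrite /wgt nth_rcons ltn_ord.
  by rewrite -cats1 takel_cat // ltnW.
by rewrite /wgt nth_rcons ltnn eqxx -cats1 take_size_cat.
Qed.

Lemma lyap (beta rho : R) m n :
  0 <= beta -> 0 <= rho ->
  (forall y, 0 <= pp y) ->
  (forall y : nat, y != 0%N -> pp y <= 1) ->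
  (forall y : nat, pp (y + D)%N * beta ^+ y.+1 +
      (if y == 0%N then 0 else 1 - pp y) * beta ^+ y.-1 <= rho * beta ^+ y) ->
  \sum_(s <- paths n) W m s * beta ^+ (endst m s) <= rho ^+ n * beta ^+ m.
Proof.
move=> b0 r0 p0 p1 Hy; elim: n => [|n IH].
  by rewrite /= big_cons big_nil /W big_ord0 /endst /= !mul1r addr0.
rewrite /= big_cat !big_map /= -big_split /=.
apply: (@le_trans _ _ (\sum_(s <- paths n) rho * (W m s * beta ^+ endst m s))).
  apply: ler_sum => s _.
  rewrite !W_rcons /endst !foldl_rcons -/(endst m s) /nxt.
  have W0 : 0 <= W m s.
    rewrite /W; apply: prodr_ge0 => i _; rewrite /wgt.
    case: (nth _ _ _) => //; case: eqP => // /eqP; rewrite subr_ge0; exact: p1.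
  set y := endst m s.
  rewrite -!mulrA -mulrDr (mulrCA rho); apply: ler_wpM2l => //.
by rewrite -mulr_sumr exprS -mulrA ler_wpM2l.
Qed.

End W.

Lemma W_ge0 (R : realType) (pp : nat -> R) D m s :
  (forall y, 0 <= pp y) -> (forall y : nat, y != 0%N -> pp y <= 1) -> 0 <= @W R pp D m s.
Proof.
move=> p0 p1; rewrite /W; apply: prodr_ge0 => i _; rewrite /wgt.
case: (nth _ _ _) => //; case: eqP => // /eqP; rewrite subr_ge0; exact: p1.
Qed.

Lemma final_real (R : realType) (r C rho : R) : 0 <= r -> 0 < C -> 0 <= rho -> rho < 1 ->
  (forall n, r <= rho ^+ n * C) -> r = 0.
Proof.
move=> r0 C0 rh0 rh1 H.
case: (ltgtP r 0) => // [|rp]; first by rewrite ltNge r0.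
have h : `|rho| < 1 by rewrite ger0_norm.
have e0 : 0 < r / C by rewrite divr_gt0.
have := @cvgr0_norm_lt _ _ _ _ _ _ (cvg_expr h) _ e0.
case => N _ HN.
have := HN N (leqnn N) => /=; rewrite ger0_norm ?exprn_ge0 // => hN.
have := H N; rewrite -ler_pdivrMr // => /(lt_le_trans hN).
by rewrite ltxx.
Qed.


Lemma key1 {R : realType} (t e u : R) : 0 < t -> 0 < e -> e <= 1 -> 5 * e <= t -> 1 <= u ->
  u * (2 * e + e ^+ 2) <= t + e * u ^+ 2 / 2 + e * t * u / 2.
Proof.
move=> t0 e0 e1 et u1.
have P1 : 0 <= e * (u - 3) ^+ 2 by rewrite mulr_ge0 // ?sqr_ge0 ?ltW.
have P2 : 0 <= e * (1 - e) * u by rewrite !mulr_ge0 //; lra.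
have P3 : 0 <= e * t * u by rewrite !mulr_ge0 //; lra.
nra.
Qed.

Lemma key2 (R : realType) (t e u v : R) : 0 < t -> 0 < e -> e <= 1 -> 5 * e <= t -> 1 <= u ->
  u + t <= v -> (1 + e) ^+ 2 / v <= 1 / u + e / 2.
Proof.
move=> t0 e0 e1 et u1 uv.
have u0 : 0 < u by lra.
have v0 : 0 < v by lra.
rewrite ler_pdivrMr //.
have w0 : 0 < 1 / u by rewrite divr_gt0.
have h1 : (1 / u + e / 2) * (u + t) <= (1 / u + e / 2) * v.
  by apply: ler_wpM2l => //; lra.
apply: le_trans h1.
have K := @key1 R t e u t0 e0 e1 et u1.
rewrite -(ler_pM2l u0).
have -> : u * ((1 / u + e / 2) * (u + t)) = u + t + e * u ^+ 2 / 2 + e * t * u / 2.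
  by field; lra.
rewrite expr2 in K *; nra.
Qed.

Definition ppf {R : realType} (g1 g2 : R) (j : nat) : R := g1 / (g1 + g2 * j%:R).

Lemma analytic {R : realType} (g1 g2 : R) (D : nat) : 0 < g1 -> 0 < g2 -> (0 < D)%N ->
  exists beta rho : R, 1 <= beta /\ 0 <= rho /\ rho < 1 /\
   forall y : nat, ppf g1 g2 (y + D)%N * beta ^+ y.+1 +
      (if y == 0%N then 0 else 1 - ppf g1 g2 y) * beta ^+ y.-1 <= rho * beta ^+ y.
Proof.
move=> g10 g20 D0.
set t := g2 / g1.
have t0 : 0 < t by rewrite divr_gt0.
set e := t / (5 + t).
have e0 : 0 < e by rewrite divr_gt0 //; lra.
have e1 : e <= 1 by rewrite ler_pdivrMr; lra.
have et : 5 * e <= t.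
  rewrite /e mulrA ler_pdivrMr; last lra.
  nra.
have ppE j : ppf g1 g2 j = 1 / (1 + t * j%:R).
  rewrite /ppf /t; have : 0 <= j%:R :> R by [].
  move=> ?.
  have n1 : g1 != 0 by rewrite gt_eqF.
  have n2 : g1 + g2 * j%:R != 0 by rewrite gt_eqF //; nra.
  have n3 : 1 + g2 / g1 * j%:R != 0.
    rewrite gt_eqF //; have : 0 <= g2 / g1 * j%:R by rewrite mulr_ge0 // ltW.
    lra.
  field; rewrite ?n1 ?n2 ?n3 //.
have D1 : 1 <= D%:R :> R by rewrite ler1n.
exists (1 + e), ((1 + e / 2) / (1 + e)); split; first lra.
split; first by rewrite divr_ge0 //; lra.
split; first by rewrite ltr_pdivrMr; lra.
case=> [|y].
  rewrite /= mul0r addr0 expr1 expr0 mulr1 ppE add0n.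
  have h1 : 1 / (1 + t * D%:R) <= 1 / (1 + t).
    rewrite ler_pdivrMr; last nra.
    rewrite mulrC mulrA mulr1 ler_pdivlMr; last lra.
    nra.
  apply: (@le_trans _ _ (1 / (1 + t) * (1 + e))).
    by rewrite ler_wpM2r //; lra.
  rewrite ler_pdivlMr; last lra.
  rewrite (_ : 1 / (1 + t) * (1 + e) * (1 + e) = (1 + e) * (1 + e) / (1 + t)); last first.
    by ring.
  rewrite ler_pdivrMr; last lra.
  have : e * e <= e * 1 by rewrite ler_wpM2l // ltW.
  have : 0 <= e * t by rewrite mulr_ge0 // ltW.
  nra.
rewrite /= !exprS !mulrA.
have X0 : 0 <= (1 + e) ^+ y by rewrite exprn_ge0 //; lra.
rewrite -mulrDl ler_wpM2r // divfK; last by rewrite gt_eqF //; lra.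
rewrite !ppE.
have u1 : 1 <= 1 + t * y.+1%:R.
  have : 0 <= t * y.+1%:R by rewrite mulr_ge0 // ltW.
  lra.
have uv : 1 + t * y.+1%:R + t <= 1 + t * (y.+1 + D)%:R.
  rewrite natrD mulrDr.
  have : t * 1 <= t * D%:R by rewrite ler_wpM2l // ltW.
  lra.
have K := @key2 R _ _ _ _ t0 e0 e1 et u1 uv.
have -> : 1 / (1 + t * (y.+1 + D)%:R) * (1 + e) * (1 + e) =
          (1 + e) ^+ 2 / (1 + t * (y.+1 + D)%:R) by rewrite expr2; ring.
lra.
Qed.


Lemma lam_up (R : realType) (a : R) : 0 <= a ->
  (lebesgue_measure (`]-oo, a[ `&` @unit_interval R) <= a%:E)%E.
Proof.
move=> a0.
apply: (@le_trans _ _ (lebesgue_measure [set` `[0, a]])).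
  apply: le_measure; rewrite ?inE.
  - by apply: measurableI; apply: measurable_itv.
  - exact: measurable_itv.
  move=> x [] /=; rewrite /unit_interval /= !in_itv /= => xa /andP[x0 _].
  by rewrite x0 ltW.
rewrite lebesgue_measure_itv /= lte_fin.
case: ltgtP a0 => // [a0 _|<- _]; first by rewrite sube0.
by [].
Qed.

Lemma lam_dn (R : realType) (b : R) : b <= 1 ->
  (lebesgue_measure (`[b, +oo[ `&` @unit_interval R) <= (1 - b)%:E)%E.
Proof.
move=> b1.
apply: (@le_trans _ _ (lebesgue_measure [set` `[b, 1]])).
  apply: le_measure; rewrite ?inE.
  - by apply: measurableI; apply: measurable_itv.
  - exact: measurable_itv.
  move=> x [] /=; rewrite /unit_interval /= !in_itv /= => xa /andP[_ x1].
  by rewrite andbT in xa; rewrite xa x1.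
rewrite lebesgue_measure_itv /= lte_fin.
by case: ifP => _; rewrite ?lee_fin ?subr_ge0.

Qed.


Lemma lee_prod_ord (R : realType) n (f g : 'I_n -> \bar R) :
  (forall i, (0 <= f i)%E) -> (forall i, (f i <= g i)%E) ->
  (\prod_(i < n) f i <= \prod_(i < n) g i)%E.
Proof.
move=> f0 fg.
suff : (0 <= \prod_(i < n) f i /\ \prod_(i < n) f i <= \prod_(i < n) g i)%E by case.
apply: (big_ind2 (fun a b => 0 <= a /\ a <= b)%E).
- by rewrite lee01.
- move=> a1 a2 b1 b2 [h1 h2] [h3 h4]; split; first exact: mule_ge0.
  exact: lee_pmul.
- by move=> i _; split.
Qed.

Lemma take_mkseq (T : Type) (f : nat -> T) i n : (i <= n)%N -> take i (mkseq f n) = mkseq f i.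
Proof. by move=> h; rewrite /mkseq -map_take take_iota (minn_idPl h). Qed.

Section Main.
Variables (R : realType) (g1 g2 : R) (hg1 : 0 < g1) (hg2 : 0 < g2).

Local Notation pp := (ppf g1 g2).

Lemma pp_gt0 j : 0 < pp j.
Proof. rewrite /ppf; apply: divr_gt0 => //; apply: (lt_le_trans hg1); rewrite lerDl; apply: mulr_ge0 => //; exact: ltW. Qed.

Lemma pp_le1 j : pp j <= 1.
Proof.
have h : g1 <= g1 + g2 * j%:R by rewrite lerDl; apply: mulr_ge0 => //; exact: ltW.
rewrite /ppf ler_pdivrMr ?mul1r //; exact: (lt_le_trans hg1).
Qed.

Lemma bd_stepE u x : bd_step g1 g2 u x = if u < pp x then x.+1 else x.-1.
Proof. by []. Qed.

Lemma step_lemma (D : nat) u x y : (0 < D)%N -> x = (y + D)%N ->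
  bd_step g1 g2 u x = (bd_step g1 g2 u y + D)%N ->
  (u < pp x -> bd_step g1 g2 u y = y.+1) /\
  (~~ (u < pp x) -> [/\ y != 0%N, ~~ (u < pp y) & bd_step g1 g2 u y = y.-1]).
Proof.
move=> D0 xE; rewrite !bd_stepE.
case: (u < pp x); case: (u < pp y) => /=; split => //; try lia.
all: move=> _; split => //; apply/eqP; lia.
Qed.

Variables (dsp : measure_display) (T : measurableType dsp) (P : probability T R)
  (U : nat -> T -> R) (hU : iid_uniform01 P U).

Lemma Umeas i (B : set R) : measurable B -> measurable (U i @^-1` B).
Proof. by move=> mB; rewrite -[_ @^-1` _]setTI; apply: (hU.1 i). Qed.

Definition Aset D m s i : set R :=
  let y := endst m (take i s) in
  if nth false s i then `]-oo, pp (y + D)%N[%classic else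
  if y == 0%N then set0 else `[pp y, +oo[%classic.

Lemma Aset_meas D m s i : measurable (Aset D m s i).
Proof.
rewrite /Aset; case: nth; first exact: measurable_itv.
by case: eqP => _; [exact: measurable0|exact: measurable_itv].
Qed.

Definition Rect D m s : set T := \bigcap_(i in `I_(size s)) (U i @^-1` Aset D m s i).

Lemma Rect_meas D m s : measurable (Rect D m s).
Proof.
apply: fin_bigcap_measurable; first exact: finite_II.
by move=> i _; apply: Umeas; apply: Aset_meas.
Qed.

Lemma P_Rect D m s : (P (Rect D m s) <= (@W R pp D m s)%:E)%E.
Proof.
rewrite /Rect (hU.2 (size s) (Aset D m s) (Aset_meas D m s)) /W -prodEFin.
apply: lee_prod_ord => i; first exact: measure_ge0.
rewrite /Aset /wgt; case: nth.
  by apply: lam_up; apply: ltW; apply: pp_gt0.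
case: eqP => _; last by apply: lam_dn; apply: pp_le1.
by rewrite set0I measure0.
Qed.


Lemma const_meas (Q : Prop) : measurable [set _ : T | Q].
Proof.
have [q|nq] := pselect Q.
  by rewrite (_ : [set _ | Q] = setT) //; apply/seteqP; split.
by rewrite (_ : [set _ | Q] = set0) //; apply/seteqP; split.
Qed.

Definition cyc w n x := bd_cocycle g1 g2 (fun k => U k w) n x.

Lemma step_meas i j k : measurable [set w | bd_step g1 g2 (U i w) j = k].
Proof.
rewrite (_ : [set w | _] = ((U i @^-1` `]-oo, pp j[) `&` [set _ | j.+1 = k]) `|`
                           ((U i @^-1` `[pp j, +oo[) `&` [set _ | j.-1 = k])).
  have m1 := @Umeas i _ (measurable_itv `]-oo, pp j[).
  have m2 := @Umeas i _ (measurable_itv `[pp j, +oo[).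
  apply: measurableU.
    apply: measurableI; [exact: m1|exact: const_meas].
  apply: measurableI; [exact: m2|exact: const_meas].
apply/seteqP; split => w /=; rewrite bd_stepE /= !in_itv /= ?andbT.
  by case: ltP => h ->; [left|right].
by case=> -[h <-]; [rewrite h|rewrite ltNge h].
Qed.

Lemma C_meas n x k : measurable [set w | cyc w n x = k].
Proof.
elim: n k => [|n IH] k.
  by rewrite /cyc /=; exact: const_meas.
rewrite (_ : [set w | _] = \bigcup_(j in setT)
    ([set w | cyc w n x = j] `&` [set w | bd_step g1 g2 (U n w) j = k])).
  by apply: bigcup_measurable => j _; apply: measurableI => //; apply: step_meas.
apply/seteqP; split => w /=.
  by move=> h; exists (cyc w n x).
by case=> j _ [<-].
Qed.

Definition Eset D x0 y0 := [set w | forall n, cyc w n x0 = (cyc w n y0 + D)%N].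

Lemma E_meas D x0 y0 : measurable (Eset D x0 y0).
Proof.
rewrite (_ : Eset _ _ _ = \bigcap_n \bigcup_(j in setT)
    ([set w | cyc w n y0 = j] `&` [set w | cyc w n x0 = (j + D)%N])).
  apply: bigcapT_measurable => n; apply: bigcup_measurable => j _.
  by apply: measurableI; apply: C_meas.
apply/seteqP; split => w /=.
  by move=> h n _; exists (cyc w n y0) => //; split.
by move=> h n; have [j _ [-> ->]] := h n I.
Qed.

Lemma E_sub D x0 y0 n w : (0 < D)%N -> x0 = (y0 + D)%N -> Eset D x0 y0 w ->
  Rect D y0 (mkseq (fun i => U i w < pp (cyc w i x0)) n) w.
Proof.
move=> D0 xE Ew.
set f := fun i => U i w < pp (cyc w i x0).
have st i := @step_lemma D (U i w) (cyc w i x0) (cyc w i y0) D0 (Ew i) (Ew i.+1).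
have endE i : endst y0 (mkseq f i) = cyc w i y0.
  elim: i => [//|i IH].
  have cycS : cyc w i.+1 y0 = bd_step g1 g2 (U i w) (cyc w i y0) by [].
  rewrite mkseqS /endst foldl_rcons -/(endst y0 (mkseq f i)) IH cycS /nxt /f.
  have [h1 h2] := st i.
  case: ifP => h.
    by rewrite (h1 h).
  by have [_ _ ->] := h2 (negbT h).
move=> i /=; rewrite size_mkseq => hi.
rewrite /Aset (@take_mkseq _ f i n (ltnW hi)) endE (@nth_mkseq _ false f n i hi) /f.
have [h1 h2] := st i.
case: ifP => h.
  rewrite -(Ew i) /= in_itv /=; exact: h.
have [h4 h3 _] := h2 (negbT h).
rewrite (negbTE h4) /= in_itv /= andbT leNgt; exact: h3.
Qed.

Lemma sub_sum (X : eqType) (l : seq X) (F : X -> set T) (E : set T) :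
  (forall s, measurable (F s)) -> measurable E ->
  E `<=` [set w | exists2 s, s \in l & F s w] ->
  (P E <= \sum_(s <- l) P (F s))%E.
Proof.
move=> mF; elim: l E => [|a l IH] E mE sub.
  rewrite big_nil (_ : E = set0) ?measure0 //.
  by apply/seteqP; split => // w /sub [].
rewrite big_cons.
have mE' : measurable (E `&` ~` F a) by apply: measurableI => //; apply: measurableC.
apply: (@le_trans _ _ (P (F a `|` (E `&` ~` F a)))).
  apply: le_measure; rewrite ?inE //; first exact: measurableU.
  by move=> w Ew; have [Fw|nFw] := pselect (F a w); [left|right].
apply: le_trans (measureU2 _ _ _) _ => //.
apply: leeD => //; apply: IH => // w [Ew nFw].
have [s] := sub w Ew; rewrite inE => /orP[/eqP ->|sl] Fw //.
by exists s.
Qed.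

Lemma mainD D x0 y0 :
  (0 < D)%N -> x0 = (y0 + D)%N ->
  measurable (Eset D x0 y0) /\ P (Eset D x0 y0) = 0%E.
Proof.
move=> D0 xE.
have mE := E_meas D x0 y0.
split => //.
have [beta [rho [b1 [r0 [r1 Hy]]]]] := @analytic R g1 g2 D hg1 hg2 D0.
have p0 y : 0 <= ppf g1 g2 y by apply: ltW; apply: pp_gt0.
have p1 y : y != 0%N -> ppf g1 g2 y <= 1 by move=> _; apply: pp_le1.
have bound n : (P (Eset D x0 y0) <= (rho ^+ n * beta ^+ y0)%:E)%E.
  apply: le_trans (@sub_sum _ (paths n) (Rect D y0) _ _ mE _) _.
  - by move=> s; apply: Rect_meas.
  - move=> w Ew; exists (mkseq (fun i => U i w < ppf g1 g2 (cyc w i x0)) n).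
      by apply: mem_paths; rewrite size_mkseq.
    exact: E_sub.
  apply: (@le_trans _ _ (\sum_(s <- paths n) (@W R (ppf g1 g2) D y0 s)%:E)%E).
    by apply: lee_sum => s _; apply: P_Rect.
  rewrite sumEFin lee_fin.
  apply: le_trans (@lyap R (ppf g1 g2) D beta rho y0 n (le_trans ler01 b1) r0 p0 p1 Hy).
  apply: ler_sum => s _; apply: ler_peMr; first exact: W_ge0.
  by apply: exprn_ege1.
have h0 := measure_ge0 P (Eset D x0 y0).
have h1 := probability_le1 P mE.
have fin : P (Eset D x0 y0) \is a fin_num.
  by rewrite ge0_fin_numE // (le_lt_trans h1) // ltey.
rewrite -(fineK fin) in h0 bound *.
congr (_%:E); apply: (@final_real R _ (beta ^+ y0) rho) => //.
- by apply: fine_ge0; apply: measure_ge0.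
- by apply: exprn_gt0; apply: (lt_le_trans ltr01 b1).
Qed.

End Main.


Theorem lemma3p2 (R : realType) (g1 g2 : R) (hg1 : 0 < g1) (hg2 : 0 < g2)
    (dsp : measure_display) (T : measurableType dsp) (P : probability T R)
    (U : nat -> T -> R) (hU : iid_uniform01 P U)
    (d : int) (hd : d != 0) (x0 y0 : nat) (hxy : I_d d (x0, y0)) :
  let E := [set w : T | forall n : nat,
              I_d d (bd_cocycle g1 g2 (fun k => U k w) n x0,
                     bd_cocycle g1 g2 (fun k => U k w) n y0)] in
  measurable E /\ P E = 0%E.
Proof.
move=> E; rewrite {}/E.
move: hd hxy; rewrite /I_d /=; case: d => [D|D] hd hxy.
  have D0 : (0 < D)%N by case: D hd {hxy}.
  have xE : x0 = (y0 + D)%N by lia.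
  rewrite (_ : [set w : T | _] = @Eset R g1 g2 dsp T U D x0 y0).
    exact: (@mainD R g1 g2 hg1 hg2 dsp T P U hU D x0 y0 D0 xE).
  apply/seteqP; split => w /= h n; have := h n; rewrite /I_d /= /cyc; lia.
have xE : y0 = (x0 + D.+1)%N by lia.
rewrite (_ : [set w : T | _] = @Eset R g1 g2 dsp T U D.+1 y0 x0).
  exact: (@mainD R g1 g2 hg1 hg2 dsp T P U hU D.+1 y0 x0 (ltn0Sn D) xE).
apply/seteqP; split => w /= h n; have := h n; rewrite /I_d /= /cyc; lia.
Qed.
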